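(* For every sufficiently large prime $N$ and every $\mu$ with $N^{-1/2}\log^2N\le\mu<1$, there is a set $T$ of residues modulo $N$ such that $|f_T|\le\mu$ and $$|T|=O\left(\frac{L_1^2}{\mu^2}\cdot\frac{1+\log(1/\mu)}{L_2+\log(1/\mu)}\right),$$ with an absolute implied constant.
   Context: $L_1=\log N$, $L_2=\log\log N$. For a set $T$ of residues modulo $N$, $f_T(k)=\sum_{t\in T}e^{2\pi ikt/N}$ and $|f_T|=\frac1{|T|}\max_{1\le k\le N-1}|f_T(k)|$. *)

(* Defs.v *)
From mathcomp Require Import all_boot.
From Stdlib Require Import Reals.

Set Implicit Arguments.
Unset Strict Implicit.
Unset Printing Implicit Defensive.

(* Real and imaginary parts of f_T(k) = sum_{t in T} e^{2 pi i k t / N}. *)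
Definition fT_re (N : nat) (T : {set 'I_N}) (k : nat) : R :=
  \big[Rplus/0%R]_(t in T) cos (2 * PI * INR k * INR t / INR N).

Definition fT_im (N : nat) (T : {set 'I_N}) (k : nat) : R :=
  \big[Rplus/0%R]_(t in T) sin (2 * PI * INR k * INR t / INR N).

Definition fT_abs (N : nat) (T : {set 'I_N}) (k : nat) : R :=
  sqrt (fT_re T k ^ 2 + fT_im T k ^ 2).

(* |f_T| = (1/|T|) max_{1 <= k <= N-1} |f_T(k)|  (the moduli are >= 0,
   so starting the max at 0 does not change it). *)
Definition fT_norm (N : nat) (T : {set 'I_N}) : R :=
  / INR #|T| * \big[Rmax/0%R]_(1 <= k < N) fT_abs T k.

(* Main.v *)
From HB Require Import structures.
Require Import Defs.
From mathcomp Require Import all_boot.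
From Stdlib Require Import Reals Lra Lia Psatz Classical.
From mathcomp Require Import zify.

Set Implicit Arguments.
Unset Strict Implicit.
Unset Printing Implicit Defensive.

Lemma RplusA : associative Rplus. Proof. move=> *; ring. Qed.
Lemma RmultA : associative Rmult. Proof. move=> *; ring. Qed.
HB.instance Definition _ := Monoid.isComLaw.Build R 0%R Rplus RplusA Rplus_comm Rplus_0_l.
HB.instance Definition _ := Monoid.isComLaw.Build R 1%R Rmult RmultA Rmult_comm Rmult_1_l.
HB.instance Definition _ := Monoid.isMulLaw.Build R 0%R Rmult Rmult_0_l Rmult_0_r.
HB.instance Definition _ := Monoid.isAddLaw.Build R Rmult Rplus Rmult_plus_distr_r Rmult_plus_distr_l.

Local Open Scope R_scope.
Lemma exp_bound y : Rabs y <= /2 -> exp y <= 1 + y + 2 * y ^ 2.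
Proof.
move=> Hy.
have H1 := exp_ineq1_le (- y).
have Hy1 : -/2 <= y <= /2 by split_Rabs; lra.
have Hpos : 0 < 1 - y by lra.
have He : exp y * exp (- y) = 1 by rewrite -exp_plus Rplus_opp_r exp_0.
have Hep : 0 < exp y := exp_pos y.
have : exp y * (1 - y) <= 1.
  rewrite -He; apply Rmult_le_compat_l; lra.
move=> H2.
have H3 : 1 <= (1 - y) * (1 + y + 2 * y ^ 2) by nra.
nra.
Qed.

Lemma coord_bound p l c : 0 <= p <= 1 -> 0 <= l <= /2 -> Rabs c <= 1 ->
  p * exp (l * ((1 - p) * c)) + (1 - p) * exp (l * ((0 - p) * c)) <= exp (2 * l ^ 2 * p).
Proof.
move=> Hp Hl Hc.
have Hc' : -1 <= c <= 1 by split_Rabs; lra.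
have B1 : exp (l * ((1 - p) * c)) <= 1 + l * ((1 - p) * c) + 2 * (l * ((1 - p) * c)) ^ 2.
  apply exp_bound; rewrite !Rabs_mult (Rabs_pos_eq l) ?(Rabs_pos_eq (1-p)); try lra.
  have : Rabs c * (1 - p) <= 1 by nra. nra.
have B2 : exp (l * ((0 - p) * c)) <= 1 + l * ((0 - p) * c) + 2 * (l * ((0 - p) * c)) ^ 2.
  apply exp_bound; rewrite !Rabs_mult (Rabs_pos_eq l) ?Rabs_Ropp ?Rminus_0_l ?Rabs_Ropp ?(Rabs_pos_eq p); try lra.
  have : p * Rabs c <= 1 by nra. nra.
have B3 := exp_ineq1_le (2 * l ^ 2 * p).
have Hc2 : c ^ 2 <= 1 by nra.
have : p * exp (l * ((1 - p) * c)) + (1 - p) * exp (l * ((0 - p) * c)) <=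
  p * (1 + l * ((1 - p) * c) + 2 * (l * ((1 - p) * c)) ^ 2) + (1 - p) * (1 + l * ((0 - p) * c) + 2 * (l * ((0 - p) * c)) ^ 2).
  apply Rplus_le_compat; apply Rmult_le_compat_l; lra.
have E : p * (1 + l * ((1 - p) * c) + 2 * (l * ((1 - p) * c)) ^ 2) + (1 - p) * (1 + l * ((0 - p) * c) + 2 * (l * ((0 - p) * c)) ^ 2) = 1 + 2 * l^2 * c^2 * (p * (1 - p)) by ring.
rewrite E => H.
have : 2 * l^2 * c^2 * (p * (1 - p)) <= 2 * l^2 * p.
  have Hl2 : 0 <= l^2 by nra.
  have : c^2 * (p * (1-p)) <= p by nra.
  nra.
lra.
Qed.
Definition b2r (b : bool) : R := if b then 1 else 0.

Definition wt {N : nat} (p : R) (w : {ffun 'I_N -> bool}) : R :=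
  \big[Rmult/1]_(t : 'I_N) (if w t then p else 1 - p).

Definition Sc {N : nat} (p : R) (c : 'I_N -> R) (w : {ffun 'I_N -> bool}) : R :=
  \big[Rplus/0]_(t : 'I_N) ((b2r (w t) - p) * c t).

Lemma exp_sum I (r : seq I) (P : pred I) (F : I -> R) :
  exp (\big[Rplus/0]_(i <- r | P i) F i) = \big[Rmult/1]_(i <- r | P i) exp (F i).
Proof. apply: (big_morph exp) => [x y|]; [exact: exp_plus | exact: exp_0]. Qed.

Lemma sum_const_R n (c : R) : \big[Rplus/0]_(t : 'I_n) c = INR n * c.
Proof.
rewrite big_const_ord; elim: n => [|n IH] /=; first ring.
rewrite IH; case: n {IH} => [|n] /=; ring.
Qed.

Lemma prod_le I (r : seq I) (P : pred I) (F G : I -> R) :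
  (forall i, P i -> 0 <= F i <= G i) ->
  0 <= \big[Rmult/1]_(i <- r | P i) F i <= \big[Rmult/1]_(i <- r | P i) G i.
Proof.
move=> H; apply: (big_ind2 (fun x y => 0 <= x <= y)); first lra.
  move=> x1 x2 y1 y2 [h1 h2] [h3 h4]; split; [nra|].
  apply Rmult_le_compat; lra.
exact: H.
Qed.

Lemma sum_le I (r : seq I) (P : pred I) (F G : I -> R) :
  (forall i, P i -> F i <= G i) ->
  \big[Rplus/0]_(i <- r | P i) F i <= \big[Rplus/0]_(i <- r | P i) G i.
Proof.
move=> H; apply: (big_ind2 (fun x y => x <= y)); first lra.
  move=> x1 x2 y1 y2 h1 h2; lra.
exact: H.
Qed.

Lemma sum_ge0 I (r : seq I) (P : pred I) (F : I -> R) :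
  (forall i, P i -> 0 <= F i) -> 0 <= \big[Rplus/0]_(i <- r | P i) F i.
Proof.
move=> H; apply: (big_ind (fun x => 0 <= x)); first lra.
  move=> x y h1 h2; lra.
exact: H.
Qed.

Lemma wt_ge0 (N : nat) p (w : {ffun 'I_N -> bool}) : 0 <= p <= 1 -> 0 <= wt p w.
Proof.
move=> Hp; rewrite /wt; apply: (big_ind (fun x => 0 <= x)); first lra.
  move=> x y h1 h2; nra.
by move=> t _; case: (w t); lra.
Qed.

Lemma wt_sum (N : nat) p : \big[Rplus/0]_(w : {ffun 'I_N -> bool}) wt p w = 1.
Proof.
rewrite /wt.
have -> : \big[Rplus/0]_(w : {ffun 'I_N -> bool}) \big[Rmult/1]_(t : 'I_N) (if w t then p else 1 - p)
  = \big[Rmult/1]_(t : 'I_N) \big[Rplus/0]_(b : bool) (if b then p else 1 - p).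
  by rewrite (bigA_distr_bigA (fun (t : 'I_N) (b : bool) => if b then p else 1 - p)).
rewrite big1 // => t _; rewrite big_bool /=; ring.
Qed.

Lemma mgf N p l (c : 'I_N -> R) : 0 <= p <= 1 -> 0 <= l <= /2 ->
  (forall t, Rabs (c t) <= 1) ->
  \big[Rplus/0]_(w : {ffun 'I_N -> bool}) (wt p w * exp (l * Sc p c w))
   <= exp (2 * l ^ 2 * p * INR N).
Proof.
move=> Hp Hl Hc.
have E : forall w : {ffun 'I_N -> bool}, wt p w * exp (l * Sc p c w) =
   \big[Rmult/1]_(t : 'I_N) ((if w t then p else 1 - p) * exp (l * ((b2r (w t) - p) * c t))).
  move=> w; rewrite /Sc big_distrr /= exp_sum /wt.
  by rewrite -big_split.
rewrite (eq_bigr _ (fun w _ => E w)).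
rewrite -(bigA_distr_bigA (fun (t : 'I_N) (b : bool) => (if b then p else 1 - p) * exp (l * ((b2r b - p) * c t)))).
have -> : 2 * l ^ 2 * p * INR N = \big[Rplus/0]_(t : 'I_N) (2 * l ^ 2 * p).
  rewrite sum_const_R; ring.
rewrite exp_sum.
apply prod_le => t _; rewrite big_bool /=; split.
  have := exp_pos (l * ((1 - p) * c t)); have := exp_pos (l * ((0 - p) * c t)); nra.
exact: coord_bound.
Qed.
Lemma cos_sum_tel a n : 2 * sin (a / 2) * \big[Rplus/0]_(t : 'I_n) cos (a * INR t)
  = sin (a * (INR n - /2)) + sin (a / 2).
Proof.
elim: n => [|n IH].
  rewrite big_ord0 /=.
  replace (a * (0 - /2)) with (- (a/2)) by field. rewrite sin_neg; ring.
rewrite big_ord_recr Rmult_plus_distr_l IH S_INR /=.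
replace (a * (INR n + 1 - / 2)) with (a * INR n + a / 2) by field.
replace (a * (INR n - / 2)) with (a * INR n - a / 2) by field.
rewrite sin_plus sin_minus; ring.
Qed.

Lemma sin_sum_tel a n : 2 * sin (a / 2) * \big[Rplus/0]_(t : 'I_n) sin (a * INR t)
  = cos (a / 2) - cos (a * (INR n - /2)).
Proof.
elim: n => [|n IH].
  rewrite big_ord0 /=.
  replace (a * (0 - /2)) with (- (a/2)) by field. rewrite cos_neg; ring.
rewrite big_ord_recr Rmult_plus_distr_l IH S_INR /=.
replace (a * (INR n + 1 - / 2)) with (a * INR n + a / 2) by field.
replace (a * (INR n - / 2)) with (a * INR n - a / 2) by field.
rewrite cos_plus cos_minus; ring.
Qed.

Lemma angle_eq (N k t : nat) : (0 < N)%nat ->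
  2 * PI * INR k * INR t / INR N = (2 * PI * INR k / INR N) * INR t.
Proof.
move=> HN; have : INR N <> 0 by apply not_0_INR; lia.
move=> H; field; exact H.
Qed.

Lemma half_sin_ne0 (N k : nat) : (0 < k)%nat -> (k < N)%nat -> sin (2 * PI * INR k / INR N / 2) <> 0.
Proof.
move=> Hk HkN.
have HN : 0 < INR N by apply lt_0_INR; apply/ltP; lia.
have Hk' : 0 < INR k by apply lt_0_INR; apply/ltP; lia.
have HkN' : INR k < INR N by apply lt_INR; apply/ltP.
replace (2 * PI * INR k / INR N / 2) with (PI * (INR k / INR N)) by (field; lra).
apply Rgt_not_eq, sin_gt_0.
  apply Rmult_lt_0_compat; [exact PI_RGT_0|]; apply Rdiv_lt_0_compat; lra.
have : INR k / INR N < 1 by apply (Rmult_lt_reg_r (INR N)); [lra|]; field_simplify; lra.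
have := PI_RGT_0; nra.
Qed.

Lemma cos_sum0 (N k : nat) : (0 < k)%nat -> (k < N)%nat ->
  \big[Rplus/0]_(t : 'I_N) cos (2 * PI * INR k * INR t / INR N) = 0.
Proof.
move=> Hk HkN.
have HN : (0 < N)%nat by lia.
rewrite (eq_bigr (fun t : 'I_N => cos ((2 * PI * INR k / INR N) * INR t))); last first.
  by move=> t _; rewrite angle_eq.
set a := 2 * PI * INR k / INR N.
have Hs := half_sin_ne0 Hk HkN; rewrite -/a in Hs.
have H := cos_sum_tel a N.
have HN' : INR N <> 0 by apply not_0_INR; lia.
replace (a * (INR N - /2)) with (- (a/2) + 2 * INR k * PI) in H by (rewrite /a; field; exact HN').
rewrite sin_period sin_neg in H.
apply (Rmult_eq_reg_l (2 * sin (a/2))).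
  rewrite H; ring.
apply Rmult_integral_contrapositive_currified; [lra|exact Hs].
Qed.

Lemma sin_sum0 (N k : nat) : (0 < k)%nat -> (k < N)%nat ->
  \big[Rplus/0]_(t : 'I_N) sin (2 * PI * INR k * INR t / INR N) = 0.
Proof.
move=> Hk HkN.
have HN : (0 < N)%nat by lia.
rewrite (eq_bigr (fun t : 'I_N => sin ((2 * PI * INR k / INR N) * INR t))); last first.
  by move=> t _; rewrite angle_eq.
set a := 2 * PI * INR k / INR N.
have Hs := half_sin_ne0 Hk HkN; rewrite -/a in Hs.
have H := sin_sum_tel a N.
have HN' : INR N <> 0 by apply not_0_INR; lia.
replace (a * (INR N - /2)) with (- (a/2) + 2 * INR k * PI) in H by (rewrite /a; field; exact HN').
rewrite cos_period cos_neg in H.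
apply (Rmult_eq_reg_l (2 * sin (a/2))).
  rewrite H; ring.
apply Rmult_integral_contrapositive_currified; [lra|exact Hs].
Qed.
Lemma sum_b2r (N : nat) (w : {ffun 'I_N -> bool}) (c : 'I_N -> R) :
  \big[Rplus/0]_(t in [set t | w t]) c t = \big[Rplus/0]_(t : 'I_N) (b2r (w t) * c t).
Proof.
rewrite big_mkcond; apply eq_bigr => t _; rewrite inE /b2r; case: (w t); ring.
Qed.

Lemma Sc_split (N : nat) p (w : {ffun 'I_N -> bool}) (c : 'I_N -> R) :
  Sc p c w = \big[Rplus/0]_(t in [set t | w t]) c t - p * \big[Rplus/0]_(t : 'I_N) c t.
Proof.
rewrite sum_b2r /Sc big_distrr /=.
have -> : forall x y : R, x - y = x + (-1) * y by move=> *; ring.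
rewrite big_distrr /= -big_split /=; apply eq_bigr => t _; ring.
Qed.

Lemma card_b2r (N : nat) (w : {ffun 'I_N -> bool}) :
  INR #|[set t | w t]| = \big[Rplus/0]_(t in [set t | w t]) 1.
Proof.
rewrite -sum1_card.
apply: (big_morph INR) => [x y|]; [exact: plus_INR | done].
Qed.
Lemma sum_const_fin (I : finType) (c : R) : \big[Rplus/0]_(i : I) c = INR #|I| * c.
Proof.
rewrite big_const; elim: #|I| => [|n IH] /=; first ring.
rewrite IH; case: n {IH} => [|n] /=; ring.
Qed.

Lemma tail_sum N p l a (c : 'I_N -> R) : 0 <= p <= 1 -> 0 <= l <= /2 ->
  (forall t, Rabs (c t) <= 1) ->
  \big[Rplus/0]_(w : {ffun 'I_N -> bool}) (wt p w * exp (l * (Sc p c w - a)))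
   <= exp (2 * l ^ 2 * p * INR N - l * a).
Proof.
move=> Hp Hl Hc.
have E : forall w : {ffun 'I_N -> bool}, wt p w * exp (l * (Sc p c w - a)) =
   (wt p w * exp (l * Sc p c w)) * exp (- (l * a)).
  move=> w; rewrite Rmult_assoc -exp_plus; congr (_ * exp _); ring.
rewrite (eq_bigr _ (fun w _ => E w)) -big_distrl /=.
rewrite /Rminus exp_plus.
apply Rmult_le_compat_r; [exact: Rlt_le (exp_pos _)|].
exact: mgf.
Qed.

Lemma union_bound N p (I : finType) (F : I -> {ffun 'I_N -> bool} -> R) (B : I -> R) :
  (forall i, \big[Rplus/0]_(w : {ffun 'I_N -> bool}) (wt p w * F i w) <= B i) ->
  \big[Rplus/0]_(w : {ffun 'I_N -> bool}) (wt p w * \big[Rplus/0]_(i : I) F i w)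
   <= \big[Rplus/0]_(i : I) B i.
Proof.
move=> H.
rewrite (eq_bigr (fun w => \big[Rplus/0]_(i : I) (wt p w * F i w))); last first.
  by move=> w _; rewrite big_distrr.
rewrite exchange_big /=; apply sum_le => i _; exact: H.
Qed.

Lemma exists_lt (I : finType) (f g : I -> R) :
  \big[Rplus/0]_(i : I) f i < \big[Rplus/0]_(i : I) g i -> exists i, f i < g i.
Proof.
move=> H; apply NNPP => Hn.
have : \big[Rplus/0]_(i : I) g i <= \big[Rplus/0]_(i : I) f i.
  apply sum_le => i _; apply Rnot_lt_le => Hi; apply Hn; by exists i.
lra.
Qed.

Lemma term_le_sum (I : finType) (F : I -> R) (i : I) :
  (forall j, 0 <= F j) -> F i <= \big[Rplus/0]_(j : I) F j.
Proof.
move=> H; rewrite (bigD1 i) //=.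
have : 0 <= \big[Rplus/0]_(j | j != i) F j by apply sum_ge0.
lra.
Qed.

Lemma exp_lt1 l x a : 0 < l -> exp (l * (x - a)) < 1 -> x < a.
Proof.
move=> Hl H; rewrite -exp_0 in H; apply exp_lt_inv in H; nra.
Qed.

Lemma Sc_opp N p (c : 'I_N -> R) w : Sc p (fun t => - c t) w = - Sc p c w.
Proof.
rewrite /Sc.
have -> : forall x : R, - x = (-1) * x by move=> *; ring.
rewrite big_distrr /=; apply eq_bigr => t _; ring.
Qed.

Definition cfun (N : nat) (k : 'I_N) (j : 'I_4) (t : 'I_N) : R :=
  match nat_of_ord j with
  | 0 => cos (2 * PI * INR k * INR t / INR N)
  | 1 => - cos (2 * PI * INR k * INR t / INR N)
  | 2 => sin (2 * PI * INR k * INR t / INR N)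
  | _ => - sin (2 * PI * INR k * INR t / INR N)
  end.

Lemma cfun_bound N k j t : Rabs (@cfun N k j t) <= 1.
Proof.
rewrite /cfun; case: (nat_of_ord j) => [|[|[|n]]]; rewrite ?Rabs_Ropp;
  apply Rabs_le; [apply COS_bound|apply COS_bound|apply SIN_bound|apply SIN_bound].
Qed.

Lemma core (N : nat) (s eps : R) :
  (1 < N)%nat -> 0 < s <= INR N -> 0 < eps <= 2 ->
  4 * INR N * exp (- (eps ^ 2 * s / 8)) + exp (- (s / 8)) + exp (- (s / 32)) < 1 ->
  exists T : {set 'I_N}, s / 2 < INR #|T| < 2 * s /\
    forall k : nat, (0 < k)%nat -> (k < N)%nat ->
      Rabs (fT_re T k) < eps * s /\ Rabs (fT_im T k) < eps * s.
Proof.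
move=> HN Hs He Hsum.
have HN0 : 0 < INR N by apply lt_0_INR; lia.
set p := s / INR N.
have Hp : 0 <= p <= 1.
  rewrite /p; split; [apply Rlt_le, Rdiv_lt_0_compat; lra|].
  apply (Rmult_le_reg_r (INR N)); [lra|]; field_simplify; lra.
have HpN : p * INR N = s by rewrite /p; field; lra.
set l := eps / 4.
set a := eps * s.
set F := fun (kj : 'I_N * 'I_4) (w : {ffun 'I_N -> bool}) =>
  exp (l * (Sc p (cfun kj.1 kj.2) w - a)).
set one := fun (t : 'I_N) => 1.
set mone := fun (t : 'I_N) => -1.
set Phi := fun w : {ffun 'I_N -> bool} => \big[Rplus/0]_(kj : 'I_N * 'I_4) F kj w
   + (exp (/4 * (Sc p one w - s)) + exp (/8 * (Sc p mone w - s / 2))).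
have HPhi : \big[Rplus/0]_(w : {ffun 'I_N -> bool}) (wt p w * Phi w) < 1.
  have E1 : forall w : {ffun 'I_N -> bool}, wt p w * Phi w = wt p w * \big[Rplus/0]_(kj : 'I_N * 'I_4) F kj w
     + (wt p w * exp (/4 * (Sc p one w - s)) + wt p w * exp (/8 * (Sc p mone w - s / 2))).
    move=> w; rewrite /Phi; ring.
  rewrite (eq_bigr _ (fun w _ => E1 w)) big_split /= big_split /=.
  have B1 : \big[Rplus/0]_(w : {ffun 'I_N -> bool}) (wt p w * \big[Rplus/0]_(kj : 'I_N * 'I_4) F kj w)
      <= \big[Rplus/0]_(kj : 'I_N * 'I_4) exp (- (eps ^ 2 * s / 8)).
    apply union_bound => kj.
    have := @tail_sum N p l a (cfun kj.1 kj.2) Hp.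
    have Hl : 0 <= l <= /2 by rewrite /l; lra.
    move=> /(_ Hl (cfun_bound _ _)) H; apply (Rle_trans _ _ _ H).
    right; congr exp; rewrite /l /a; rewrite Rmult_assoc HpN; field.
  rewrite sum_const_fin card_prod !card_ord in B1.
  have B2 : \big[Rplus/0]_(w : {ffun 'I_N -> bool}) (wt p w * exp (/4 * (Sc p one w - s)))
      <= exp (- (s / 8)).
    have H := @tail_sum N p (/4) s one Hp.
    have Hl : 0 <= /4 <= /2 by lra.
    have Hc : forall t, Rabs (one t) <= 1 by move=> t; rewrite /one Rabs_R1; lra.
    apply (Rle_trans _ _ _ (H Hl Hc)); right; congr exp; rewrite Rmult_assoc HpN; field.
  have B3 : \big[Rplus/0]_(w : {ffun 'I_N -> bool}) (wt p w * exp (/8 * (Sc p mone w - s / 2)))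
      <= exp (- (s / 32)).
    have H := @tail_sum N p (/8) (s / 2) mone Hp.
    have Hl : 0 <= /8 <= /2 by lra.
    have Hc : forall t, Rabs (mone t) <= 1 by move=> t; rewrite /mone Rabs_Ropp Rabs_R1; lra.
    apply (Rle_trans _ _ _ (H Hl Hc)); right; congr exp; rewrite Rmult_assoc HpN; field.
  have E4 : INR (muln N 4) = 4 * INR N by rewrite mult_INR /=; ring.
  rewrite E4 in B1.
  eapply Rle_lt_trans; [apply (Rplus_le_compat _ _ _ _ B1 (Rplus_le_compat _ _ _ _ B2 B3))|].
  lra.
have [w Hw] : exists v : {ffun 'I_N -> bool}, wt p v * Phi v < wt p v * 1.
  apply exists_lt.
  have E : \big[Rplus/0]_(w : {ffun 'I_N -> bool}) (wt p w * 1) = 1.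
    exact: (etrans (eq_bigr _ (fun w _ => Rmult_1_r (wt p w))) (wt_sum N p)).
  rewrite E; exact HPhi.
have HF0 : forall kj v, 0 <= F kj v by move=> kj v; apply Rlt_le, exp_pos.
have HPhi0 : forall v, 0 <= \big[Rplus/0]_(kj : 'I_N * 'I_4) F kj v by move=> w'; apply sum_ge0.
have Hw0 := wt_ge0 w Hp.
have HPw : Phi w < 1.
  have : 0 < wt p w.
    destruct Hw0 as [Hw0|Hw0]; first done.
    rewrite -Hw0 !Rmult_0_l in Hw; lra.
  move=> Hpos; apply (Rmult_lt_reg_l (wt p w)); lra.
have EU := exp_pos (/4 * (Sc p one w - s)).
have ED := exp_pos (/8 * (Sc p mone w - s / 2)).
have HS := HPhi0 w.
have HFw : forall kj, F kj w < 1.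
  move=> kj; have := @term_le_sum _ (fun kj => F kj w) kj (fun j => HF0 j w).
  rewrite /Phi in HPw; simpl in *; lra.
have HU : exp (/4 * (Sc p one w - s)) < 1 by rewrite /Phi in HPw; lra.
have HD : exp (/8 * (Sc p mone w - s / 2)) < 1 by rewrite /Phi in HPw; lra.
apply exp_lt1 in HU; last lra.
apply exp_lt1 in HD; last lra.
have Hcard : Sc p one w = INR #|[set t | w t]| - s.
  rewrite Sc_split card_b2r sum_const_R /one; lra.
have Hcard' : Sc p mone w = - Sc p one w by rewrite -Sc_opp.
have HH : s / 2 < INR #|[set t | w t]| < 2 * s by split; lra.
exists [set t | w t]; split; first exact HH.
move=> k Hk HkN.
have Hl0 : 0 < l by rewrite /l; lra.
set ko : 'I_N := Ordinal HkN.
have Hre : fT_re [set t | w t] k = Sc p (cfun ko (@Ordinal 4 0 isT)) w.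
  rewrite Sc_split /cfun /= (cos_sum0 Hk HkN) /fT_re Rmult_0_r Rminus_0_r; reflexivity.
have Hre' : - fT_re [set t | w t] k = Sc p (cfun ko (@Ordinal 4 1 isT)) w.
  rewrite /cfun /= Sc_opp Sc_split (cos_sum0 Hk HkN) /fT_re Rmult_0_r Rminus_0_r; reflexivity.
have Him : fT_im [set t | w t] k = Sc p (cfun ko (@Ordinal 4 2 isT)) w.
  rewrite Sc_split /cfun /= (sin_sum0 Hk HkN) /fT_im Rmult_0_r Rminus_0_r; reflexivity.
have Him' : - fT_im [set t | w t] k = Sc p (cfun ko (@Ordinal 4 3 isT)) w.
  rewrite /cfun /= Sc_opp Sc_split (sin_sum0 Hk HkN) /fT_im Rmult_0_r Rminus_0_r; reflexivity.
have H0 := exp_lt1 Hl0 (HFw (ko, @Ordinal 4 0 isT)).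
have H1 := exp_lt1 Hl0 (HFw (ko, @Ordinal 4 1 isT)).
have H2 := exp_lt1 Hl0 (HFw (ko, @Ordinal 4 2 isT)).
have H3 := exp_lt1 Hl0 (HFw (ko, @Ordinal 4 3 isT)).
simpl in H0, H1, H2, H3.
rewrite -Hre in H0; rewrite -Hre' in H1; rewrite -Him in H2; rewrite -Him' in H3.
have HH2 : Rabs (fT_re [set t | w t] k) < eps * s /\ Rabs (fT_im [set t | w t] k) < eps * s.
  split; apply Rabs_def1; rewrite /a in H0 H1 H2 H3; lra.
exact HH2.
Qed.
Lemma exp_mono x y : x <= y -> exp x <= exp y.
Proof. move=> [H|->]; [left; exact: exp_increasing | right; done]. Qed.

Lemma exp_INR n : exp (INR n) = exp 1 ^ n.
Proof.
elim: n => [|n IH]; first by rewrite /= exp_0.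
rewrite S_INR exp_plus IH /=; ring.
Qed.

Lemma ln_ge (x y : R) : 0 < y -> exp x <= y -> x <= ln y.
Proof.
move=> Hy H; apply Rnot_lt_le => Hl.
have := exp_increasing _ _ Hl; rewrite exp_ln //; lra.
Qed.

Lemma sqrt_bound x y m : 0 <= m -> x ^ 2 + y ^ 2 <= m ^ 2 -> sqrt (x ^ 2 + y ^ 2) <= m.
Proof.
move=> Hm H; rewrite -(sqrt_pow2 m Hm); exact: sqrt_le_1_alt.
Qed.

Lemma final_size (L L2 l mu : R) : 1 <= L -> 0 < L2 <= L -> 0 < l -> 0 < mu ->
  768 * L / mu ^ 2 <= 768 * (L ^ 2 / mu ^ 2) * ((1 + l) / (L2 + l)).
Proof.
move=> HL HL2 Hl Hmu.
have Hm2 : 0 < mu ^ 2 by nra.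
have HD : 0 < L2 + l by lra.
have H1 : / L <= (1 + l) / (L2 + l).
  have E : (1 + l) / (L2 + l) - / L = (L * (1 + l) - (L2 + l)) * / (L * (L2 + l)).
    field; lra.
  have : 0 <= (L * (1 + l) - (L2 + l)) * / (L * (L2 + l)).
    apply Rmult_le_pos; [nra|]; apply Rlt_le, Rinv_0_lt_compat; nra.
  lra.
have E2 : 768 * L / mu ^ 2 = 768 * (L ^ 2 / mu ^ 2) * / L by field; lra.
rewrite E2; apply Rmult_le_compat_l; last exact H1.
apply Rmult_le_pos; [lra|]; apply Rmult_le_pos; [nra|]; apply Rlt_le, Rinv_0_lt_compat; lra.
Qed.

Local Close Scope R_scope.

Theorem corollary5 :
  exists C : R, (0 < C)%R /\
  exists N0 : nat, forall N : nat, prime N -> (N0 <= N)%N ->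
  forall mu : R,
    (ln (INR N) ^ 2 / sqrt (INR N) <= mu)%R -> (mu < 1)%R ->
    exists T : {set 'I_N},
      (0 < #|T|)%N /\
      (fT_norm T <= mu)%R /\
      (INR #|T| <= C * (ln (INR N) ^ 2 / mu ^ 2) *
                   ((1 + ln (/ mu)) / (ln (ln (INR N)) + ln (/ mu))))%R.
Proof.
Local Open Scope R_scope.
exists 768; split; first lra.
exists 6561%nat => N HNp HN0 mu Hmu Hmu1.
have HNr : 6561 <= INR N.
  have : INR 6561 <= INR N by apply le_INR; apply/leP.
  have -> : INR 6561 = 6561 by rewrite INR_IZR_INZ; simpl; lra.
  done.
set L := ln (INR N) in Hmu *.
have HL : 8 <= L.
  apply ln_ge; [lra|].
  have -> : 8 = INR 8 by simpl; lra.
  rewrite exp_INR.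
  have H3 : exp 1 ^ 8 <= 3 ^ 8 by apply pow_incr; split; [apply Rlt_le, exp_pos | exact exp_le_3].
  lra.
have HsN : 0 < sqrt (INR N) by apply sqrt_lt_R0; lra.
have Hmu0 : 0 < mu.
  apply: (Rlt_le_trans _ _ _ _ Hmu); apply Rdiv_lt_0_compat; [nra|exact HsN].
have Hmu2 : L ^ 4 / INR N <= mu ^ 2.
  have Hs2 : sqrt (INR N) * sqrt (INR N) = INR N by apply sqrt_sqrt; lra.
  have E : (L ^ 2 / sqrt (INR N)) ^ 2 = L ^ 4 / (sqrt (INR N) * sqrt (INR N)) by field; lra.
  rewrite Hs2 in E; rewrite -E; apply pow_incr; split; [apply Rlt_le, Rdiv_lt_0_compat; [nra|exact HsN]|exact Hmu].
set s := 384 * L / mu ^ 2.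
have Hm2 : 0 < mu ^ 2 by nra.
have Hm21 : mu ^ 2 < 1 by nra.
have Hs0 : 384 * L <= s.
  rewrite /s; apply (Rmult_le_reg_r (mu ^ 2)); [lra|]; field_simplify; [nra|lra].
have HsN' : s <= INR N.
  have HNpos : 0 < INR N by lra.
  have HL4 : 0 < L ^ 4 by apply pow_lt; lra.
  have HL3 : 512 <= L ^ 3.
    have : 64 <= L ^ 2 by nra.
    have -> : L ^ 3 = L ^ 2 * L by ring.
    nra.
  have : s <= 384 * L * (INR N / L ^ 4).
    rewrite /s; apply Rmult_le_compat_l; [lra|].
    have Hi : / mu ^ 2 <= / (L ^ 4 / INR N).
      apply Rinv_le_contravar; [apply Rdiv_lt_0_compat; lra| exact Hmu2].
    have E5 : / (L ^ 4 / INR N) = INR N / L ^ 4 by field; lra.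
    rewrite E5 in Hi; exact Hi.
  have : 384 * L * (INR N / L ^ 4) <= INR N.
    have E : 384 * L * (INR N / L ^ 4) = INR N * (384 / L ^ 3) by field; lra.
    rewrite E; have : 384 / L ^ 3 <= 1.
      apply (Rmult_le_reg_r (L ^ 3)); [lra|]; field_simplify; lra.
    nra.
  lra.
have HN1 : (1 < N)%nat by apply: leq_trans HN0.
have HexpL : exp (3 * L) = INR N ^ 3.
  have -> : 3 * L = L + L + L by ring.
  rewrite !exp_plus /L exp_ln; [ring|lra].
have Hsum : 4 * INR N * exp (- ((mu / 4) ^ 2 * s / 8)) + exp (- (s / 8)) + exp (- (s / 32)) < 1.
  have E1 : - ((mu / 4) ^ 2 * s / 8) = - (3 * L) by rewrite /s; field; lra.
  have E2 : exp (- (s / 8)) <= exp (- (3 * L)) by apply exp_mono; nra.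
  have E3 : exp (- (s / 32)) <= exp (- (3 * L)) by apply exp_mono; nra.
  rewrite E1; rewrite !exp_Ropp in E2 E3 *; rewrite HexpL in E2 E3 *.
  have HN3 : INR N ^ 3 >= 6561 * INR N * INR N by nra.
  have Hinv : (4 * INR N + 2) * / INR N ^ 3 < 1.
    apply (Rmult_lt_reg_r (INR N ^ 3)); [nra|]; field_simplify; [nra|nra].
  have : 4 * INR N * / INR N ^ 3 + / INR N ^ 3 + / INR N ^ 3 = (4 * INR N + 2) * / INR N ^ 3 by ring.
  lra.
have He : 0 < mu / 4 <= 2 by split; lra.
have [T [[HT1 HT2] HTk]] := core HN1 (conj (Rlt_le_trans _ _ _ (ltac:(lra) : 0 < 384 * L) Hs0) HsN') He Hsum.
exists T; split.
  have : INR 0 < INR #|T| by change (INR 0) with 0; lra.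
  by move/INR_lt/ltP.
split.
  have HM : \big[Rmax/0]_(1 <= k < N) fT_abs T k <= mu * INR #|T|.
    rewrite big_nat_cond; apply: (big_ind (fun x => x <= mu * INR #|T|)).
    - nra.
    - move=> x y Hx Hy; exact: Rmax_lub.
    move=> k /andP [/andP [Hk1 Hk2] _].
    have [Hre Him] := HTk k Hk1 Hk2.
    rewrite /fT_abs; apply: (Rle_trans _ (mu * s / 2)); last nra.
    apply sqrt_bound; [nra|].
    have := Rabs_def2 _ _ Hre; have := Rabs_def2 _ _ Him.
    have Hmus : 0 < mu * s by nra.
    nra.
  rewrite /fT_norm.
  have HTp : 0 < INR #|T| by lra.
  apply (Rle_trans _ (/ INR #|T| * (mu * INR #|T|))).
    apply Rmult_le_compat_l; [apply Rlt_le, Rinv_0_lt_compat; lra| exact HM].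
  right; field; lra.
have Hl : 0 < ln (/ mu).
  rewrite -ln_1; apply ln_increasing; [lra|].
  rewrite -Rinv_1; apply Rinv_lt_contravar; lra.
have HL2 : 0 < ln L <= L.
  split.
    rewrite -ln_1; apply ln_increasing; lra.
  have := exp_ineq1 L ltac:(lra).
  move=> H; left; rewrite -{2}(ln_exp L); apply ln_increasing; lra.
have := final_size (ltac:(lra) : 1 <= L) HL2 Hl Hmu0.
have : 2 * s = 768 * L / mu ^ 2 by rewrite /s; field; lra.
rewrite -/L; lra.
Qed.
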